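(* Under Total Store Order, $\lim_{i\to\infty}\Pr[\text{the instruction at position } i \text{ of } S_i \text{ has type } \mathrm{ST}]=2/3$ (where $m\ge i$).
   Context: Fix $m\ge 1$. A random program is a sequence $x_1,\dots,x_{m+2}$ of memory operations, each with a type in $\{\mathrm{LD},\mathrm{ST}\}$: $x_1,\dots,x_m$ have i.i.d. types, each $\mathrm{ST}$ with probability $1/2$ and $\mathrm{LD}$ with probability $1/2$; $x_{m+1}$ (the critical load) has type $\mathrm{LD}$ and $x_{m+2}$ (the critical store) has type $\mathrm{ST}$. The initial order is $S_0=(x_1,\dots,x_{m+2})$. A memory model is specified by the set of ordered type pairs $(\tau_1,\tau_2)$ for which an instruction of type $\tau_2$ may be moved ahead of an immediately preceding instruction of type $\tau_1$: Sequential Consistency (SC) allows no pair; Total Store Order (TSO) allows only the pair $(\mathrm{ST},\mathrm{LD})$ (a load may move ahead of a preceding store); Weak Ordering (WO) allows all four pairs. The settling process runs rounds $r=1,\dots,m+2$. Before round $r$, the current order $S_{r-1}$ consists of $x_1,\dots,x_{r-1}$ in some order in positions $1,\dots,r-1$, followed by $x_r,\dots,x_{m+2}$ in positions $r,\dots,m+2$. In round $r$, instruction $x_r$ (starting at position $r$) repeatedly attempts to swap with the instruction immediately preceding it in the current order: the attempt fails automatically if the pair (type of the preceding instruction, type of $x_r$) is not allowed by the memory model, or if $x_r$ is the critical store and the preceding instruction is the critical load; otherwise the attempt succeeds independently with probability $1/2$. The round ends when an attempt fails or $x_r$ reaches position $1$; the resulting order is $S_r$. *)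

(* Defs.v *)
From HB Require Import structures.
From mathcomp Require Import all_boot all_order all_algebra.
Set Implicit Arguments. Unset Strict Implicit. Unset Printing Implicit Defensive.
Import Order.TTheory GRing.Theory Num.Theory.
Local Open Scope ring_scope.

Definition dist (A : Type) := seq (rat * A).

Definition dret (A : Type) (a : A) : dist A := [:: (1, a)].

Definition dbind (A B : Type) (d : dist A) (f : A -> dist B) : dist B :=
  flatten [seq [seq (p.1 * q.1, q.2) | q <- f p.2] | p <- d].

Definition dprob (A : Type) (d : dist A) (E : pred A) : rat :=
  \sum_(p <- d | E p.2) p.1.

Definition ST : bool := true.
Definition LD : bool := false.

(* An instruction: (its index k, meaning it is x_k ; its type). *)
Definition instr := (nat * bool)%type.

(* Memory models: allowed t1 t2 = an instruction of type t2 may move ahead of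
   an immediately preceding instruction of type t1. *)
Definition SC_allowed (t1 t2 : bool) : bool := false.
Definition TSO_allowed (t1 t2 : bool) : bool := (t1 == ST) && (t2 == LD).
Definition WO_allowed (t1 t2 : bool) : bool := true.

(* The program x_1..x_{m+2}: ts are the types of x_1..x_m;
   x_{m+1} is the critical load, x_{m+2} the critical store. *)
Definition prog (m : nat) (ts : seq bool) : seq instr :=
  [seq (k.+1, nth LD (ts ++ [:: LD; ST]) k) | k <- iota 0 m.+2].

Fixpoint tydist (n : nat) : dist (seq bool) :=
  match n with
  | 0 => dret [::]
  | n'.+1 => [seq (p.1 / 2%:R, b :: p.2) | b <- [:: ST; LD], p <- tydist n']
  end.

(* R is the already-settled prefix listed in REVERSE order
   (head = instruction at position r-1, last = position 1); x starts at
   position r and repeatedly tries to swap with its predecessor. *)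
Fixpoint settle (allowed : bool -> bool -> bool) (m : nat) (x : instr)
    (R : seq instr) : dist (seq instr) :=
  match R with
  | [::] => dret [:: x]                       (* reached position 1 *)
  | y :: rest =>
      if ~~ allowed y.2 x.2 || ((x.1 == m.+2)%N && (y.1 == m.+1)%N)
      then dret (x :: R)                      (* automatic failure *)
      else (1 / 2%:R, x :: R)                 (* attempt fails *)
           :: [seq (q.1 / 2%:R, y :: q.2) | q <- settle allowed m x rest]
                                              (* attempt succeeds *)
  end.

Fixpoint run (allowed : bool -> bool -> bool) (m : nat) (ts : seq bool)
    (r : nat) : dist (seq instr) :=
  match r with
  | 0 => dret [::]
  | r'.+1 => dbind (run allowed m ts r')
               (fun R => settle allowed m (nth (0%N, LD) (prog m ts) r') R)
  end.

Definition order_of (m : nat) (ts : seq bool) (r : nat) (R : seq instr) :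
  seq instr := rev R ++ drop r (prog m ts).

Definition Sdist (allowed : bool -> bool -> bool) (m r : nat) :
  dist (seq instr) :=
  dbind (tydist m) (fun ts =>
    [seq (q.1, order_of m ts r q.2) | q <- run allowed m ts r]).

Definition prob_ST_at (allowed : bool -> bool -> bool) (m i : nat) : rat :=
  dprob (Sdist allowed m i) (fun S => (nth (0%N, LD) S i.-1).2 == ST).

(* Main.v *)
Require Import Defs.
From HB Require Import structures.
From mathcomp Require Import all_boot all_order all_algebra zify ring.
Import Order.TTheory GRing.Theory Num.Theory.
Set Implicit Arguments. Unset Strict Implicit.
Local Open Scope ring_scope.

Definition wsum (A : Type) (d : dist A) (g : A -> rat) : rat :=
  foldr (fun p acc => p.1 * g p.2 + acc) 0 d.

Lemma dprob_wsum (A : Type) (d : dist A) (E : pred A) :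
  dprob d E = wsum d (fun a => (E a)%:R).
Proof.
elim: d => [|p d IH]; first by rewrite /dprob big_nil.
rewrite /dprob big_cons -/(dprob d E) IH /=.
by case: (E p.2); rewrite ?mulr1 ?mulr0 ?add0r.
Qed.

Lemma wsum_cat (A : Type) (d1 d2 : dist A) g :
  wsum (d1 ++ d2) g = wsum d1 g + wsum d2 g.
Proof. by elim: d1 => [|p d IH] /=; rewrite ?add0r // IH addrA. Qed.

Lemma wsum_scale (A : Type) (d : dist A) g c :
  wsum [seq (c * q.1, q.2) | q <- d] g = c * wsum d g.
Proof. by elim: d => [|p d IH] /=; rewrite ?mulr0 // IH mulrDr mulrA. Qed.

Lemma wsum_mapw (A B : Type) (d : dist A) (h : A -> B) g c :
  wsum [seq (q.1 * c, h q.2) | q <- d] g = c * wsum d (fun a => g (h a)).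
Proof.
by elim: d => [|p d IH] /=; rewrite ?mulr0 // IH mulrDr [p.1 * c]mulrC mulrA.
Qed.

Lemma wsum_map (A B : Type) (d : dist A) (h : A -> B) g :
  wsum [seq (q.1, h q.2) | q <- d] g = wsum d (fun a => g (h a)).
Proof. by elim: d => [|p d IH] //= ; rewrite IH. Qed.

Lemma wsum_bind (A B : Type) (d : dist A) (f : A -> dist B) g :
  wsum (dbind d f) g = wsum d (fun a => wsum (f a) g).
Proof.
elim: d => [|p d IH] //.
rewrite /dbind /= -/(dbind d f) wsum_cat wsum_scale IH //.
Qed.



Lemma wsum_ext (A : Type) (P : pred A) (d : dist A) g1 g2 :
  all (fun p => P p.2) d -> (forall a, P a -> g1 a = g2 a) ->
  wsum d g1 = wsum d g2.
Proof.
move=> + H; elim: d => [|p d IH] //= /andP [Hp Hd].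
by rewrite IH // H.
Qed.

Lemma wsum_lin (A : Type) (d : dist A) g c :
  wsum d (fun a => c * g a) = c * wsum d g.
Proof. by elim: d => [|p d IH] /=; rewrite ?mulr0 // IH mulrDr mulrCA. Qed.

Lemma all_dbind (A B : Type) (P : pred A) (Q : pred B) (d : dist A) f :
  all (fun p => P p.2) d -> (forall a, P a -> all (fun q => Q q.2) (f a)) ->
  all (fun q => Q q.2) (dbind d f).
Proof.
move=> + H; elim: d => [|p d IH] //= /andP [Hp Hd].
rewrite /dbind /= -/(dbind d f) all_cat IH // andbT all_map.
exact: (H _ Hp).
Qed.

Lemma tyfront n f :
  wsum (tydist n.+1) f =
  wsum (tydist n) (fun ts => f (ST :: ts)) / 2%:R +
  wsum (tydist n) (fun ts => f (LD :: ts)) / 2%:R.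
Proof.
rewrite /= !wsum_cat /= addr0 !wsum_mapw.
by rewrite ![_^-1 * _]mulrC.
Qed.

Lemma tysize n : all (fun p => size p.2 == n) (tydist n).
Proof.
elim: n => [|n IH] //=; rewrite !all_cat !all_map /= andbT.
by apply/andP; split; apply: sub_all IH => p.
Qed.

Lemma tyrear n f :
  wsum (tydist n.+1) f =
  wsum (tydist n) (fun ts => f (rcons ts ST)) / 2%:R +
  wsum (tydist n) (fun ts => f (rcons ts LD)) / 2%:R.
Proof.
elim: n f => [|n IH] f.
  by rewrite tyfront.
rewrite tyfront (IH (fun ts => f (ST :: ts))) (IH (fun ts => f (LD :: ts))).
rewrite (tyfront _ (fun ts => f (rcons ts ST))) (tyfront _ (fun ts => f (rcons ts LD))) /=.
set a := wsum _ _; set b := wsum _ _; set c := wsum _ _; set e := wsum _ _.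
rewrite !mulrDl -!addrA; congr (_ + _); rewrite !addrA; congr (_ + _).
by rewrite addrC.
Qed.

Lemma tymass n : wsum (tydist n) (fun _ => 1) = 1.
Proof.
elim: n => [|n IH]; first by rewrite /= mulr1 addr0.
rewrite tyfront IH -mulrDl divff // pnatr_eq0.
Qed.

Lemma half2 : 2%:R^-1 + 2%:R^-1 = 1 :> rat.
Proof. by vm_compute. Qed.

Definition hd (R : seq instr) : rat := ((head (0%N, LD) R).2 == ST)%:R.

Lemma settle_mass a m x R : wsum (settle a m x R) (fun _ => 1) = 1.
Proof.
elim: R => [|y R IH] /=; first by rewrite mulr1 addr0.
case: ifP => _ /=; first by rewrite mulr1 addr0.
by rewrite mulr1 wsum_mapw IH !mulr1 mul1r half2.
Qed.

Lemma settle_hd m k b R : k != m.+2 ->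
  wsum (settle TSO_allowed m (k, b) R) hd = if b then 1 else hd R / 2%:R.
Proof.
move=> Hk; case: R => [|[j c] R] /=.
  by case: b; rewrite /hd /= ?mulr1 ?mulr0 ?addr0 ?mul0r.
rewrite (negbTE Hk) andFb orbF /TSO_allowed.
case: b; case: c => /=; rewrite /hd /= ?mulr1 ?mulr0 ?addr0 ?mul0r ?add0r //.
by rewrite wsum_mapw /= settle_mass mulr1 mul1r.
Qed.

Fixpoint qf (ts : seq bool) (r : nat) : rat :=
  match r with
  | 0 => 0
  | r'.+1 => if nth LD ts r' then 1 else qf ts r' / 2%:R
  end.

Lemma prog_nth m ts r : size ts = m -> (r < m)%N ->
  nth (0%N, LD) (prog m ts) r = (r.+1, nth LD ts r).
Proof.
move=> Hs Hr; rewrite /prog (nth_map 0%N); last by rewrite size_iota; lia.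
rewrite nth_iota; last lia.
by rewrite add0n nth_cat Hs Hr.
Qed.

Lemma run_mass a m ts r : wsum (run a m ts r) (fun _ => 1) = 1.
Proof.
elim: r => [|r IH] /=; first by rewrite mulr1 addr0.
rewrite wsum_bind -[RHS]IH; apply: (@wsum_ext _ predT) => //; first by apply/allP.
by move=> R _ /=; rewrite settle_mass.
Qed.

Lemma run_hd m ts r : size ts = m -> (r <= m)%N ->
  wsum (run TSO_allowed m ts r) hd = qf ts r.
Proof.
move=> Hs; elim: r => [|r IH] Hr; first by rewrite /= /hd /= mul1r addr0.
have Hr' : (r < m)%N by [].
rewrite [run _ _ _ _]/= wsum_bind prog_nth //.
rewrite (@wsum_ext _ predT _ _ (fun R => if nth LD ts r then 1 else 2%:R^-1 * hd R)).
- rewrite [qf _ _]/=; case: (nth LD ts r); first by rewrite run_mass.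
  by rewrite wsum_lin IH ?(ltnW Hr') // mulrC.
- by apply/allP.
- move=> R _; rewrite settle_hd; last by apply/eqP; lia.
  by case: (nth LD ts r) => //; rewrite mulrC.
Qed.

Lemma settle_size a m x R : all (fun q => size q.2 == (size R).+1) (settle a m x R).
Proof.
elim: R => [|y R IH] /=; first by [].
case: ifP => _ /=; first by rewrite andbT.
rewrite all_map /= eqxx /=; exact: IH.
Qed.

Lemma run_size a m ts r : all (fun q => size q.2 == r) (run a m ts r).
Proof.
elim: r => [|r IH] //=.
apply: (@all_dbind _ _ (fun R : seq instr => size R == r) (fun R : seq instr => size R == r.+1) _ _ IH).
by move=> R /eqP <-; exact: settle_size.
Qed.

Lemma qf_rcons ts b r : (r <= size ts)%N -> qf (rcons ts b) r = qf ts r.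
Proof.
elim: r => [|r IH] Hr //=.
by rewrite nth_rcons Hr IH // ltnW.
Qed.

Lemma Et_stable i k :
  wsum (tydist (i + k)) (fun ts => qf ts i) = wsum (tydist i) (fun ts => qf ts i).
Proof.
elim: k => [|k IH]; first by rewrite addn0.
rewrite addnS tyrear.
rewrite (@wsum_ext _ (fun ts => size ts == (i + k)%N) _ (fun ts => qf (rcons ts ST) i) (fun ts => qf ts i)); last first.
  by move=> ts /eqP Hs; rewrite qf_rcons // Hs leq_addr.
  exact: tysize.
rewrite (@wsum_ext _ (fun ts => size ts == (i + k)%N) _ (fun ts => qf (rcons ts LD) i) (fun ts => qf ts i)); last first.
  by move=> ts /eqP Hs; rewrite qf_rcons // Hs leq_addr.
  exact: tysize.
by rewrite IH; field.
Qed.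

Lemma P_closed n :
  wsum (tydist n) (fun ts => qf ts n) = 2%:R / 3%:R - 2%:R / 3%:R / (4 ^ n)%:R.
Proof.
elim: n => [|n IH]; first by rewrite /= mul1r addr0 expn0 divr1 subrr.
rewrite tyrear.
rewrite (@wsum_ext _ (fun ts => size ts == n) _ (fun ts => qf (rcons ts ST) n.+1) (fun _ => 1)); last first.
  by move=> ts /eqP Hs /=; rewrite nth_rcons Hs ltnn eqxx.
  exact: tysize.
rewrite (@wsum_ext _ (fun ts => size ts == n) _ (fun ts => qf (rcons ts LD) n.+1) (fun ts => 2%:R^-1 * qf ts n)); last first.
  by move=> ts /eqP Hs /=; rewrite nth_rcons Hs ltnn eqxx qf_rcons ?Hs // mulrC.
  exact: tysize.
rewrite tymass wsum_lin IH expnS natrM.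
have H4 : (4 ^ n)%:R != 0 :> rat by rewrite pnatr_eq0 expn_eq0.
field; rewrite H4 /=; by [].
Qed.

Lemma prob_eq m i : (1 <= i)%N -> (i <= m)%N ->
  prob_ST_at TSO_allowed m i = 2%:R / 3%:R - 2%:R / 3%:R / (4 ^ i)%:R.
Proof.
move=> Hi Him.
rewrite /prob_ST_at dprob_wsum /Sdist wsum_bind.
rewrite (@wsum_ext _ (fun ts => size ts == m) _ _ (fun ts => qf ts i)); last first.
  move=> ts /eqP Hs; rewrite wsum_map -(run_hd Hs Him).
  apply: (@wsum_ext _ (fun R : seq instr => size R == i)); first exact: run_size.
  move=> R /eqP HR; rewrite /order_of nth_cat size_rev HR.
  have -> : (i.-1 < i)%N by lia.
  rewrite nth_rev HR; last by lia.
  have -> : (i - i.-1.+1 = 0)%N by lia.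
  by rewrite nth0.
  exact: tysize.
by rewrite -(subnKC Him) Et_stable P_closed.
Qed.

Theorem claim1 :
  forall eps : rat, 0 < eps ->
  exists N : nat, forall i m : nat, (N <= i)%N -> (1 <= m)%N -> (i <= m)%N ->
    `| prob_ST_at TSO_allowed m i - 2%:R / 3%:R | < eps.
Proof.
move=> eps He.
have He' : 0 <= eps^-1 by rewrite invr_ge0 ltW.
have Hb := archi_boundP He'.
set B := Num.Def.archi_bound _ in Hb.
exists B.+1 => i m HN Hm Him.
rewrite prob_eq //; last by lia.
have H4 : (0 < (4 ^ i)%:R :> rat) by rewrite ltr0n expn_gt0.
rewrite addrC addKr normrN ger0_norm; last by rewrite divr_ge0 // ltW.
rewrite ltr_pdivrMr //.
have Hi4 : (B%:R < (4 ^ i)%:R :> rat).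
  rewrite ltr_nat; apply: leq_ltn_trans (ltn_expl i (isT : (1 < 4)%N)); lia.
have H1 : eps * eps^-1 < eps * (4 ^ i)%:R.
  by rewrite ltr_pM2l //; exact: lt_trans Hb Hi4.
rewrite mulfV ?lt0r_neq0 // in H1.
apply: le_lt_trans H1.
by rewrite ler_pdivrMr // mul1r ler_nat.
Qed.
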